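(* For every graph $G$ and every path $P$, $\pi^*(G\boxtimes P)\le 4\,\pi^*(G)$.
   Context: All graphs are finite and simple. A lazy walk in a graph $G$ is a sequence of vertices $v_1,\dots,v_m$ such that for each $i<m$, either $v_iv_{i+1}\in E(G)$ or $v_i=v_{i+1}$. For a colouring $\phi$ of $V(G)$, a lazy walk $v_1,\dots,v_{2t}$ is $\phi$-repetitive if $\phi(v_i)=\phi(v_{i+t})$ for each $i\in\{1,\dots,t\}$. A colouring $\phi$ is strongly nonrepetitive if for every $\phi$-repetitive lazy walk $v_1,\dots,v_{2t}$ there exists $i\in\{1,\dots,t\}$ with $v_i=v_{i+t}$. $\pi^*(G)$ denotes the minimum number of colours in a strongly nonrepetitive colouring of $G$. The strong product $A\boxtimes B$ has vertex set $V(A)\times V(B)$, with distinct $(v,x),(w,y)$ adjacent iff ($v=w$ and $xy\in E(B)$) or ($x=y$ and $vw\in E(A)$) or ($vw\in E(A)$ and $xy\in E(B)$). *)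

(* Defs.v *)
From mathcomp Require Import all_boot.
Set Implicit Arguments. Unset Strict Implicit. Unset Printing Implicit Defensive.

Definition simple_graph (T : finType) (e : rel T) : Prop :=
  symmetric e /\ irreflexive e.

Definition lazy_adj (T : finType) (e : rel T) : rel T :=
  fun x y => (x == y) || e x y.

(* A lazy walk v_0, ..., v_{m-1} given as a function w : nat -> T
   (only the first m values matter). *)
Definition lazy_walk (T : finType) (e : rel T) (w : nat -> T) (m : nat) : Prop :=
  forall i, i.+1 < m -> lazy_adj e (w i) (w i.+1).

Definition strongly_nonrepetitive (T : finType) (e : rel T) (C : Type)
    (phi : T -> C) : Prop :=
  forall (w : nat -> T) (t : nat), 0 < t -> lazy_walk e w (t + t) ->
    (forall i, i < t -> phi (w i) = phi (w (i + t))) ->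
    exists2 i, i < t & w i = w (i + t).

Definition sn_colourable (T : finType) (e : rel T) (k : nat) : Prop :=
  exists phi : T -> 'I_k, strongly_nonrepetitive e phi.

Definition is_pi_star (T : finType) (e : rel T) (k : nat) : Prop :=
  sn_colourable e k /\ forall j, sn_colourable e j -> k <= j.

Definition strong_prod (A B : finType) (eA : rel A) (eB : rel B) : rel (A * B) :=
  fun u v => (u != v) && ((u.1 == v.1) || eA u.1 v.1)
                      && ((u.2 == v.2) || eB u.2 v.2).

Definition path_graph (n : nat) : rel 'I_n :=
  fun i j => (i.+1 == j :> nat) || (j.+1 == i :> nat).
Arguments path_graph : clear implicits.

(* Main.v *)
Require Import Defs.
From mathcomp Require Import all_boot zify.
Set Implicit Arguments. Unset Strict Implicit. Unset Printing Implicit Defensive.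

Fixpoint tmf (f n : nat) : bool :=
  if f is f'.+1 then (if n is 0 then false else xorb (n %% 2 == 1) (tmf f' (n %/ 2)))
  else false.

Lemma tmf_stable f g n : n <= f -> n <= g -> tmf f n = tmf g n.
Proof.
elim: f g n => [|f IH] [|g] [|n] //= Hf Hg; try lia.
rewrite (IH g) //; lia.
Qed.

Definition tm n := tmf n n.

Lemma tmE j : tm j = xorb (j %% 2 == 1) (tm (j %/ 2)).
Proof.
case: j => [//|j]. rewrite /tm /=. congr xorb. apply: tmf_stable; lia.
Qed.

Lemma tm_pair j : j %% 2 = 0 -> tm j.+1 = ~~ tm j.
Proof.
move=> Hj. rewrite (tmE j) (tmE j.+1).
have -> : j.+1 %/ 2 = j %/ 2 by lia.
have -> : (j %% 2 == 1) = false by apply/eqP; lia.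
have -> : (j.+1 %% 2 == 1) = true by apply/eqP; lia.
by case: (tm _).
Qed.

Lemma tm_overlap L : 0 < L -> forall i, ~ (forall k, k <= L -> tm (i+k) = tm (i+k+L)).
Proof.
elim/ltn_ind: L => L IH HL i H.
case: (boolP (L %% 2 == 0)) => HLe.
-
  have HL' : 0 < L %/ 2 by move/eqP: HLe; lia.
  apply: (IH (L %/ 2) _ HL' (i %/ 2)); first by lia.
  move=> r Hr.
  have := H (2 * r); rewrite (tmE (i + 2*r)) (tmE (i + 2*r + L)).
  have -> : (i + 2 * r) %/ 2 = i %/ 2 + r by lia.
  have -> : (i + 2 * r + L) %/ 2 = i %/ 2 + r + L %/ 2 by move/eqP: HLe; lia.
  have -> : ((i + 2 * r + L) %% 2 == 1) = ((i + 2 * r) %% 2 == 1).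
    by move/eqP: HLe => HLe; apply/idP/idP => /eqP He; apply/eqP; lia.
  move=> Hx; have := Hx ltac:(lia). by case: (_ == _); case: (tm _); case: (tm _).
-
  have alt : forall r, r <= L -> tm (i + r) = xorb (tm i) (r %% 2 == 1).
    elim=> [|r IHr] Hr; first by rewrite addn0 /=; case: (tm i).
    have Hstep : tm (i + r.+1) = ~~ tm (i + r).
      case: (boolP ((i + r) %% 2 == 0)) => /eqP Hp.
      + by rewrite addnS tm_pair.
      + have H1 := H r ltac:(lia). have H2 := H r.+1 Hr.
        have Hp' : (i + r + L) %% 2 = 0 by move/eqP: HLe; lia.
        have := tm_pair Hp'. rewrite -H1.
        have -> : (i + r + L).+1 = i + r.+1 + L by lia.
        by rewrite -H2.
    rewrite Hstep IHr; last lia.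
    have -> : (r.+1 %% 2 == 1) = ~~ (r %% 2 == 1).
      by apply/idP/idP => [/eqP E|E]; [apply/negP=>/eqP; lia | apply/eqP; move/negP: E => E; lia].
    by case: (tm i); case: (_ == _).
  have := alt L (leqnn L). have := H 0 (leq0n _). rewrite !addn0 => <-.
  have -> : (L %% 2 == 1) = true by apply/eqP; move: HLe => /eqP; lia.
  by case: (tm _).
Qed.
Definition u n : nat := if tm n == tm n.+1 then 1 else if tm n then 0 else 2.

Lemma u_lt3 n : u n < 3.
Proof. by rewrite /u; case: (_ == _); case: (tm n). Qed.

Lemma u_sqfree L i : 0 < L -> ~ (forall k, k < L -> u (i+k) = u (i+k+L)).
Proof.
move=> HL H.
have inv : forall k, k <= L -> (tm (i+k) == tm (i+k+L)) = (tm i == tm (i+L)).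
  elim=> [|k IHk] Hk; first by rewrite addn0.
  rewrite -IHk; last lia.
  have := H k Hk. rewrite /u !addnS !addSn.
  by case: (tm (i+k)); case: (tm (i+k).+1); case: (tm (i+k+L)); case: (tm (i+k+L).+1).
case: (boolP (tm i == tm (i+L))) => Heq.
- apply: (tm_overlap HL (i:=i)) => k Hk. by apply/eqP; rewrite inv.
- have cst : forall k, k <= L -> tm (i + k) = tm i.
    elim=> [|k IHk] Hk; first by rewrite addn0.
    have := H k Hk. have := inv k ltac:(lia). have := inv k.+1 Hk.
    rewrite (negbTE Heq) /u !addnS !addSn -(IHk ltac:(lia)).
    by move: (tm (i+k)) (tm (i+k).+1) (tm (i+k+L)) (tm (i+k+L).+1) => [] [] [] [] //=.
  by move: Heq; rewrite cst // eqxx.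
Qed.

Definition psi i : nat := if i %% 3 == 0 then 0 else (u (2*(i %/ 3) + i %% 3 - 1)).+1.

Lemma psi_lt4 i : psi i < 4.
Proof. rewrite /psi; case: (_ == _) => //. by have := u_lt3 (2 * (i %/ 3) + i %% 3 - 1). Qed.

Lemma u_neq k : u k <> u k.+1.
Proof. move=> E. apply: (@u_sqfree 1 k) => // [[|]] //= _. by rewrite !addn0 addn1. Qed.

Lemma psi_sep a b : psi a = psi b -> a = b \/ a + 3 <= b \/ b + 3 <= a.
Proof.
have key : forall x y, (y = x + 1 \/ y = x + 2) -> psi x <> psi y.
  move=> x y Hy; rewrite /psi.
  case: (boolP (x %% 3 == 0)) => /eqP Hx; case: (boolP (y %% 3 == 0)) => /eqP Hy' //.
  - by lia.
  - move=> [] E.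
    have Hi : (2 * (x %/ 3) + x %% 3 - 1).+1 = 2 * (y %/ 3) + y %% 3 - 1 by lia.
    by apply: (@u_neq (2 * (x %/ 3) + x %% 3 - 1)); rewrite Hi.
move=> E. have: ~ (b = a + 1 \/ b = a + 2) by move=> /key.
have: ~ (a = b + 1 \/ a = b + 2) by move=> /key; rewrite E.
lia.
Qed.

Lemma psi_sqfree L i : 0 < L -> ~ (forall k, k < L -> psi (i+k) = psi (i+k+L)).
Proof.
move=> HL H.
case: (ltnP L 3) => HL3.
  have := psi_sep (H 0 HL). rewrite !addn0. lia.
pose k0 := (3 - i %% 3) %% 3.
have Hk0 : (i + k0) %% 3 = 0 by rewrite /k0; lia.
have Hz : psi (i + k0 + L) = 0.
  by rewrite -H /psi; [rewrite Hk0 | rewrite /k0; lia].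
have HL3' : L %% 3 = 0.
  move: Hz; rewrite /psi. case: (boolP (_ == 0)) => /eqP // Hx _. lia.
pose s := 2 * (i %/ 3) + (i %% 3) %/ 2.
apply: (@u_sqfree (2 * (L %/ 3)) s); first lia.
move=> r Hr.
pose p := 3 * ((s + r) %/ 2) + (s + r) %% 2 + 1.
have Hp1 : i <= p by rewrite /p /s; lia.
have Hp2 : p < i + L by rewrite /p /s; lia.
have := H (p - i) ltac:(lia).
have -> : i + (p - i) = p by lia.
rewrite /psi.
have -> : (p %% 3 == 0) = false by apply/eqP; rewrite /p; lia.
have -> : ((p + L) %% 3 == 0) = false by apply/eqP; rewrite /p; lia.
move=> [] E.
have E1 : 2 * (p %/ 3) + p %% 3 - 1 = s + r by rewrite /p; lia.
have E2 : 2 * ((p + L) %/ 3) + (p + L) %% 3 - 1 = s + r + 2 * (L %/ 3) by rewrite /p; lia.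
by rewrite -E2 -E1.
Qed.

Lemma cross p q p' q' : psi p = psi q -> psi p' = psi q' ->
  (p = p' /\ (q = q'+1 \/ q' = q+1 \/ q = q'+2 \/ q' = q+2)) \/
  (q = q' /\ (p = p'+1 \/ p' = p+1 \/ p = p'+2 \/ p' = p+2)) -> False.
Proof.
move=> E1 E2 [[Hp Hq]|[Hq Hp]].
- subst p'. have := @psi_sep q q'. rewrite -E1 E2. move=> /(_ erefl). lia.
- subst q'. have := @psi_sep p p'. rewrite E1 -E2. move=> /(_ erefl). lia.
Qed.

Definition lazy_nat (a b : nat) := b = a \/ b = a.+1 \/ a = b.+1.

Definition Inv (x : nat -> nat) t m :=
  (forall j, j <= m -> x j = x 0 /\ x (j+t) = x t)
  \/ ((forall j, j <= m -> x (j+t) + x 0 = x j + x t) /\ exists pa pb, psi pa = psi pb /\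
        ((pa.+1 = x m /\ pb.+1 = x (m+t)) \/ (pa = (x m).+1 /\ pb = (x (m+t)).+1)))
  \/ ((forall j, j <= m -> x j + x (j+t) = x 0 + x t) /\ exists pa pb, psi pa = psi pb /\
        ((pa.+1 = x m /\ pb = (x (m+t)).+1) \/ (pa = (x m).+1 /\ pb.+1 = x (m+t)))).

Ltac ext Hf m := let j := fresh "j" in let Hj := fresh "Hj" in intros j Hj;
  destruct (ltnP j m.+1) as [Hjm|Hjm];
  [ generalize (Hf j ltac:(lia)); lia
  | assert (j = m.+1) by lia; subst j; generalize (Hf m (leqnn m)); lia ].

Lemma dich (x : nat -> nat) t :
  (forall j, j.+1 < t + t -> lazy_nat (x j) (x j.+1)) ->
  (forall j, j < t -> psi (x j) = psi (x (j + t))) ->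
  forall m, m < t -> Inv x t m.
Proof.
move=> Hst Hc. elim=> [|m IH] Hm.
  by left => j; rewrite leqn0 => /eqP ->.
have C0 := Hc m ltac:(lia). have C1 := Hc m.+1 Hm.
have SA := Hst m ltac:(lia). have SB := Hst (m + t) ltac:(lia).
rewrite -addSn in SB. rewrite /lazy_nat in SA SB.
case: (IH ltac:(lia)) => [Hf | [[Hf [pa [pb [Hp Hpp]]]] | [Hf [pa [pb [Hp Hpp]]]]]];
case: SA => [SA|[SA|SA]]; case: SB => [SB|[SB|SB]];
try (exfalso; apply: (cross C0 C1); lia);
try (exfalso; apply: (cross Hp C1); lia);
first
 [ left; ext Hf m
 | right; left; split; [ext Hf m | exists pa, pb; split; [exact Hp|lia]]
 | right; left; split; [ext Hf m | exists (x m), (x (m+t)); split; [exact C0|lia]]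
 | right; right; split; [ext Hf m | exists pa, pb; split; [exact Hp|lia]]
 | right; right; split; [ext Hf m | exists (x m), (x (m+t)); split; [exact C0|lia]] ].
Qed.

Lemma ivt (f : nat -> nat) m y :
  (forall j, j < m -> lazy_nat (f j) (f j.+1)) ->
  (f 0 <= y <= f m) \/ (f m <= y <= f 0) -> exists2 j, j <= m & f j = y.
Proof.
elim: m => [|m IH] Hs Hy.
  by exists 0 => //; lia.
have := Hs m (ltnSn m); rewrite /lazy_nat => Hm.
case: (boolP ((f 0 <= y <= f m) || (f m <= y <= f 0))) => Hb.
  have [j Hj Ej] := IH (fun j Hj => Hs j (ltnW Hj)) ltac:(lia).
  by exists j => //; lia.
by exists m.+1 => //; lia.
Qed.

Lemma sign (x : nat -> nat) t :
  (forall j, j.+1 < t + t -> lazy_nat (x j) (x j.+1)) ->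
  (forall j, j < t -> psi (x j) = psi (x (j + t))) ->
  forall m, m < t -> (x 0 = x t -> x m = x (m+t)) /\ (x 0 < x t -> x m + 3 <= x (m+t))
     /\ (x t < x 0 -> x (m+t) + 3 <= x m).
Proof.
move=> Hst Hc. elim=> [|m IH] Hm.
  have := psi_sep (Hc 0 Hm). rewrite add0n. lia.
have := psi_sep (Hc m.+1 Hm). have := IH ltac:(lia).
have SA := Hst m ltac:(lia). have SB := Hst (m + t) ltac:(lia).
rewrite -addSn in SB. rewrite /lazy_nat in SA SB. lia.
Qed.

Lemma boring (x : nat -> nat) t :
  (forall j, j.+1 < t + t -> lazy_nat (x j) (x j.+1)) ->
  (forall j, j < t -> psi (x j) = psi (x (j + t))) ->
  forall j, j < t -> x j = x (j + t).
Proof.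
move=> Hst Hc j Hj.
have Ht : 0 < t by lia.
have Sg := sign Hst Hc.
case: (ltngtP (x 0) (x t)) => H0; last by apply: (Sg j Hj).1.
-
  have Jn : lazy_nat (x t.-1) (x t) by have := Hst t.-1 ltac:(lia); have -> : t.-1.+1 = t by lia.
  have Sl := Sg t.-1 ltac:(lia).
  have := dich Hst Hc (m := t.-1) ltac:(lia).
  case=> [Hf | [[Hf _] | [Hf _]]].
  + exfalso. have := Hf t.-1 (leqnn _). have := Hf 0 (leq0n _). rewrite /lazy_nat in Jn. lia.
  + exfalso. apply: (@psi_sqfree (x t - x 0) (x 0)); first lia.
    move=> r Hr.
    have Hs : forall i, i < t.-1 -> lazy_nat (x i) (x i.+1) by move=> i Hi; apply: Hst; lia.
    have [k Hk Ek] := ivt (y := x 0 + r) Hs ltac:(rewrite /lazy_nat in Jn; lia).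
    have := Hc k ltac:(lia). have := Hf k Hk. rewrite Ek => E.
    have -> : x 0 + r + (x t - x 0) = x (k + t) by lia. done.
  + exfalso. have := Hf t.-1 (leqnn _).
    rewrite /lazy_nat in Jn. lia.
-
  have Jn : lazy_nat (x t.-1) (x t) by have := Hst t.-1 ltac:(lia); have -> : t.-1.+1 = t by lia.
  have Sl := Sg t.-1 ltac:(lia).
  have := dich Hst Hc (m := t.-1) ltac:(lia).
  case=> [Hf | [[Hf _] | [Hf _]]].
  + exfalso. have := Hf t.-1 (leqnn _). have := Hf 0 (leq0n _). rewrite /lazy_nat in Jn. lia.
  + exfalso.
    have Hs : forall i, i < t.-1 -> lazy_nat (x i) (x i.+1) by move=> i Hi; apply: Hst; lia.
    have key : forall r, r < x 0 - x t -> exists2 k, k < t & x k = x t + 1 + r.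
      move=> r Hr.
      have [k Hk Ek] := ivt (y := x t + 1 + r) Hs ltac:(rewrite /lazy_nat in Jn; lia).
      exists k => //; lia.
    have [k0 Hk0 Ek0] := key 0 ltac:(lia).
    have B0 := Hf k0 ltac:(lia).
    apply: (@psi_sqfree (x 0 - x t) (x t + 1 - (x 0 - x t))); first lia.
    move=> r Hr.
    have [k Hk Ek] := key r Hr.
    have := Hc k Hk. have := Hf k ltac:(lia). move=> E.
    have -> : x t + 1 - (x 0 - x t) + r + (x 0 - x t) = x k by lia.
    have -> : x t + 1 - (x 0 - x t) + r = x (k + t) by lia.
    by move=> ->.
  + exfalso. have := Hf t.-1 (leqnn _). 
    rewrite /lazy_nat in Jn. lia.
Qed.

Theorem mainTheorem7 (T : finType) (e : rel T) (n : nat) (kG kGP : nat) :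
  simple_graph e ->
  is_pi_star e kG ->
  is_pi_star (strong_prod e (path_graph n)) kGP ->
  kGP <= 4 * kG.
Proof.
move=> _ [[phi Hphi] _] [_ Hmin]. apply: Hmin.
have Hlt : forall (v : T) (y : 'I_n), 4 * phi v + psi y < 4 * kG.
  move=> v y; have := ltn_ord (phi v); have := psi_lt4 y; lia.
exists (fun p => Ordinal (Hlt p.1 p.2)).
move=> w t Ht Hw Hrep.
have Hv : lazy_walk e (fun j => (w j).1) (t+t).
  move=> j Hj; have := Hw j Hj; rewrite /lazy_adj /strong_prod.
  case/orP => [/eqP -> | /andP [/andP [_ H1] _]]; first by rewrite eqxx.
  exact H1.
pose x := fun j => nat_of_ord (w j).2.
have Hx : forall j, j.+1 < t+t -> lazy_nat (x j) (x j.+1).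
  move=> j Hj; have := Hw j Hj; rewrite /lazy_adj /strong_prod /lazy_nat /x.
  case/orP => [/eqP -> | /andP [_ /orP [/eqP -> | ]]]; first by left. by left.
  by rewrite /path_graph => /orP [/eqP <- | /eqP <-]; [right; left | right; right].
have Hcol : forall j, j < t -> 4 * phi (w j).1 + psi (w j).2 = 4 * phi (w (j+t)).1 + psi (w (j+t)).2.
  by move=> j Hj; have := Hrep j Hj => /(congr1 val).
have Hps : forall j, j < t -> psi (x j) = psi (x (j + t)).
  move=> j Hj; have := Hcol j Hj; have := psi_lt4 (w j).2; have := psi_lt4 (w (j+t)).2.
  rewrite /x; lia.
have Hph : forall j, j < t -> phi (w j).1 = phi (w (j+t)).1.
  move=> j Hj; apply: ord_inj.
  have := Hcol j Hj; have := psi_lt4 (w j).2; have := psi_lt4 (w (j+t)).2. lia.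
have [i Hi Ei] := Hphi _ t Ht Hv Hph.
exists i => //. have := boring Hx Hps Hi. rewrite /x.
move: Ei; case: (w i) => a y; case: (w (i+t)) => b z /= -> /val_inj -> //.
Qed.
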